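(* Let $G\leq\mathrm{Sym}(m)$ and $H\leq\mathrm{Sym}(n)$ both have the EKR property (for their natural actions). Then the wreath product $G\wr H$, acting on $\{1,\dots,m\}\times\{1,\dots,n\}$ by $(x,j)^{(g_1,\dots,g_n,h)}=(g_j(x),h(j))$, has the EKR property.
   Context: The wreath product $G\wr H$ has underlying set $G^n\times H$ with multiplication $(g_1,\dots,g_n,h)(g'_1,\dots,g'_n,h')=(g_1g'_{h(1)},\dots,g_ng'_{h(n)},hh')$. For a permutation group acting on a finite set: two elements $\pi,\tau$ intersect if $\pi\tau^{-1}$ has a fixed point; a subset is intersecting if every pair intersects; the group has the EKR property if every intersecting subset has size at most the size of the largest point-stabilizer. *)

(* Defs.v *)
From mathcomp Require Import all_boot all_fingroup.
Set Implicit Arguments. Unset Strict Implicit. Unset Printing Implicit Defensive.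
Local Open Scope group_scope.

(* Permutations act on the right, as in mathcomp: (p * q) x = q (p x). *)

Definition intersect (T : finType) (p q : {perm T}) : bool :=
  [exists x : T, (p * q^-1) x == x].

Definition intersecting (T : finType) (S : {set {perm T}}) : bool :=
  [forall p in S, forall q in S, intersect p q].

Definition EKR (T : finType) (G : {set {perm T}}) : Prop :=
  forall S : {set {perm T}}, S \subset G -> intersecting S ->
    #|S| <= \max_(x : T) #|'C_G[x | 'P]|.

Definition wr_fun m n (g : {ffun 'I_n -> {perm 'I_m}}) (h : {perm 'I_n})
  (p : 'I_m * 'I_n) : 'I_m * 'I_n := (g p.2 p.1, h p.2).

Lemma wr_fun_inj m n g h : injective (@wr_fun m n g h).
Proof.
move=> [x j] [y k] [E1 E2].
have ejk : j = k by exact: (perm_inj E2).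
subst k; congr (_, _); exact: (perm_inj E1).
Qed.

Definition wr_elt m n g h : {perm 'I_m * 'I_n} := perm (@wr_fun_inj m n g h).

Definition wreath m n (G : {set {perm 'I_m}}) (H : {set {perm 'I_n}})
  : {set {perm 'I_m * 'I_n}} :=
  [set wr_elt g h | g in [set g : {ffun 'I_n -> {perm 'I_m}} | [forall j, g j \in G]],
                    h in H].

(* Main.v *)
Require Import Defs.
From mathcomp Require Import all_boot all_fingroup.
Set Implicit Arguments. Unset Strict Implicit. Unset Printing Implicit Defensive.
Local Open Scope group_scope.

Lemma stabE (T:finType) (G : {set {perm T}}) x a :
  (a \in 'C_G[x | 'P]) = (a \in G) && (a x == x).
Proof. by rewrite !inE sub1set inE /=. Qed.

Lemma fiber_bound (X K : finType) (f : X -> K) (A : {set X}) (K0 : {set K}) b :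
  f @: A \subset K0 -> (forall k, #|[set x in A | f x == k]| <= b) -> #|A| <= (#|K0| * b)%N.
Proof.
move=> sub hb.
rewrite -sum1_card (partition_big f (mem K0)) /=; last first.
  by move=> x xA; apply: (subsetP sub); apply: imset_f.
rewrite -sum_nat_const; apply: leq_sum => k _.
rewrite sum1_card; apply: leq_trans (hb k).
by apply: subset_leq_card; apply/subsetP => x; rewrite !inE.
Qed.

Lemma intersectE (T : finType) (p q : {perm T}) :
  intersect p q = [exists x, p x == q x].
Proof.
rewrite /intersect; apply: eq_existsb => x; rewrite permM.
apply/eqP/eqP => [h|h]; first by rewrite -{2}h permKV.
by rewrite h permK.
Qed.

Lemma wr_eltE m n g h x j : @wr_elt m n g h (x, j) = (g j x, h j).
Proof. by rewrite permE. Qed.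

Lemma wr_elt_inj m n (x0 : 'I_m) g h g' h' :
  @wr_elt m n g h = wr_elt g' h' -> g = g' /\ h = h'.
Proof.
move=> E.
have E' p : wr_elt g h p = wr_elt g' h' p by rewrite E.
split.
  apply/ffunP => j; apply/permP => x.
  by have := E' (x, j); rewrite !wr_eltE; case.
apply/permP => j.
by have := E' (x0, j); rewrite !wr_eltE; case.
Qed.

Lemma card_ffam (I T : finType) (F : I -> {set T}) :
  #|[set g : {ffun I -> T} | [forall j, g j \in F j]]| = (\prod_j #|F j|)%N.
Proof.
have -> : #|[set g : {ffun I -> T} | [forall j, g j \in F j]]| =
  #|family (fun j => mem (F j))|.
  by apply: eq_card => g; rewrite inE; apply/forallP/familyP.
rewrite card_family foldrE big_map big_enum.
by [].
Qed.

Lemma prod_if (I : finType) (j0 : I) (a b : nat) :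
  (\prod_(j : I) (if j == j0 then a else b) = a * \prod_(j | j != j0) b)%N.
Proof.
rewrite (bigD1 j0) //= eqxx; congr (_ * _)%N.
by apply: eq_bigr => j /negbTE ->.
Qed.

Theorem theorem25 (m n : nat) (G : {group {perm 'I_m}}) (H : {group {perm 'I_n}}) :
  EKR G -> EKR H -> EKR (wreath G H).
Proof.
move=> EG EH S sS intS.
case: (set_0Vmem S) => [->|[w0 w0S]]; first by rewrite cards0.
have /existsP [[x0 j0] _] : intersect w0 w0 by move/forallP: intS => /(_ w0) /implyP /(_ w0S) /forallP /(_ w0) /implyP /(_ w0S).
set W := wreath G H.
set GG := [set g : {ffun 'I_n -> {perm 'I_m}} | [forall j, g j \in G]].
set xM := [arg max_(x > x0) #|'C_G[x | 'P]|].
set jM := [arg max_(j > j0) #|'C_H[j | 'P]|].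
have MG : \max_x #|'C_G[x | 'P]| = #|'C_G[xM | 'P]| by apply: bigmax_eq_arg.
have MH : \max_j #|'C_H[j | 'P]| = #|'C_H[jM | 'P]| by apply: bigmax_eq_arg.
pose f (gh : {ffun 'I_n -> {perm 'I_m}} * {perm 'I_n}) := wr_elt gh.1 gh.2.
set P := [set gh | [&& gh.1 \in GG, gh.2 \in H & f gh \in S]].
have interP gh gh' : gh \in P -> gh' \in P ->
    exists x j, gh.1 j x = gh'.1 j x /\ gh.2 j = gh'.2 j.
  move=> ghP gh'P.
  have : intersect (f gh) (f gh').
    move/forallP: intS => /(_ (f gh)) /implyP.
    move: ghP; rewrite inE => /and3P [_ _ ->] /(_ isT) /forallP /(_ (f gh')) /implyP.
    by move: gh'P; rewrite inE => /and3P [_ _ ->] /(_ isT).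
  rewrite intersectE => /existsP [[x j]]; rewrite /f !wr_eltE => /eqP [e1 e2].
  by exists x, j.
have step1 : #|S| <= #|P|.
  apply: leq_trans (leq_imset_card f P).
  apply: subset_leq_card; apply/subsetP => w wS.
  have := subsetP sS w wS; rewrite /wreath => /imset2P [g h gG hH ew].
  by apply/imsetP; exists (g, h) => //; rewrite inE /= gG hH /f /= -ew wS.
pose k (gh : {ffun 'I_n -> {perm 'I_m}} * {perm 'I_n}) :=
  (gh.2, [ffun j => gh.1 j * (gh.1 jM)^-1]).
set Cfam := [set c : {ffun 'I_n -> {perm 'I_m}} |
              [forall j, c j \in (if j == jM then [set 1] else G)]].
set piP := [set gh.2 | gh in P].
have step2 : #|P| <= #|setX piP Cfam| * #|'C_G[xM | 'P]|.
  apply: (@fiber_bound _ _ k).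
    apply/subsetP => _ /imsetP [gh ghP ->].
    rewrite inE /=; apply/andP; split; first by apply/imsetP; exists gh.
    rewrite inE; apply/forallP => j; rewrite ffunE.
    case: eqP => [->|_]; first by rewrite mulgV inE.
    move: ghP; rewrite inE => /and3P [/[!inE] /forallP gG _ _].
    by rewrite groupM ?groupV.
  move=> kap.
  set Fb := [set gh in P | k gh == kap].
  have FbP gh : gh \in Fb -> gh \in P by rewrite inE => /andP [].
  have Fbk gh : gh \in Fb -> k gh = kap by rewrite inE => /andP [_ /eqP].
  have kc gh gh' j : gh \in Fb -> gh' \in Fb ->
      gh.1 j * (gh.1 jM)^-1 = gh'.1 j * (gh'.1 jM)^-1.
    move=> a b; have := congr1 (fun z : {perm 'I_n} * {ffun 'I_n -> {perm 'I_m}} => z.2 j) (etrans (Fbk _ a) (esym (Fbk _ b))).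
    by rewrite /= !ffunE.
  rewrite -(@card_in_imset _ _ (fun gh : {ffun 'I_n -> {perm 'I_m}} * {perm 'I_n} => gh.1 jM) Fb).
    rewrite -MG; apply: EG.
      apply/subsetP => _ /imsetP [gh /FbP ghP ->].
      by move: ghP; rewrite inE => /and3P [/[!inE] /forallP ->].
    apply/forallP => p; apply/implyP => /imsetP [gh ghF ->].
    apply/forallP => q; apply/implyP => /imsetP [gh' gh'F ->].
    rewrite intersectE; have [x [j [e _]]] := interP _ _ (FbP _ ghF) (FbP _ gh'F).
    apply/existsP; exists ((gh.1 j * (gh.1 jM)^-1) x).
    rewrite {2}(kc _ _ j ghF gh'F) -!permM !mulgKV e //.
  move=> gh gh' ghF gh'F /= e.
  have e2 : gh.2 = gh'.2.
    by have := congr1 fst (etrans (Fbk _ ghF) (esym (Fbk _ gh'F))).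
  case: gh gh' ghF gh'F e e2 kc => g h [g' h'] ghF gh'F /= e -> kc.
  congr (_, _); apply/ffunP => j.
  have := kc _ _ j ghF gh'F; rewrite /= e; exact: mulIg.
have step3 : #|piP| <= #|'C_H[jM | 'P]|.
  rewrite -MH; apply: EH.
    apply/subsetP => _ /imsetP [gh ghP ->].
    by move: ghP; rewrite inE => /and3P [_ ->].
  apply/forallP => p; apply/implyP => /imsetP [gh ghP ->].
  apply/forallP => q; apply/implyP => /imsetP [gh' gh'P ->].
  have [x [j [_ e]]] := interP _ _ ghP gh'P.
  by rewrite intersectE; apply/existsP; exists j; rewrite e.
set Sfam := [set g : {ffun 'I_n -> {perm 'I_m}} |
              [forall j, g j \in (if j == jM then 'C_G[xM | 'P] else G)]].
set Q := setX Sfam 'C_H[jM | 'P].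
have cardQ : #|Q| = (#|Cfam| * #|'C_G[xM | 'P]| * #|'C_H[jM | 'P]|)%N.
  rewrite cardsX /Sfam /Cfam.
  rewrite (card_ffam (fun j => if j == jM then 'C_G[xM | 'P] else G)).
  rewrite (card_ffam (fun j => if j == jM then [set 1] else G)).
  rewrite (eq_bigr (fun j => if j == jM then #|'C_G[xM | 'P]| else #|G|)); last by move=> j _; case: eqP.
  rewrite [in RHS](eq_bigr (fun j => if j == jM then 1%N else #|G|)); last by move=> j _; case: eqP => _ //; rewrite cards1.
  by rewrite !prod_if mul1n [(_ * \prod_(j | _) _)%N]mulnC.
have step4 : #|Q| <= #|'C_W[(xM, jM) | 'P]|.
  rewrite -(@card_in_imset _ _ f Q); last first.
    move=> [g h] [g' h'] _ _ E; by case: (wr_elt_inj x0 E) => /= -> ->.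
  apply: subset_leq_card; apply/subsetP => _ /imsetP [[g h] gh ->].
  move: gh; rewrite inE /= => /andP []; rewrite inE => /forallP gS.
  rewrite stabE => /andP [hH /eqP hj].
  rewrite stabE /f /= wr_eltE hj.
  have := gS jM; rewrite eqxx stabE => /andP [_ /eqP ->]; rewrite eqxx andbT.
  apply: imset2_f => //; rewrite inE; apply/forallP => j.
  by have := gS j; case: eqP => // _; rewrite stabE => /andP [].
apply: leq_trans step1 _; apply: leq_trans step2 _.
apply: (leq_trans _ (leq_bigmax (xM, jM))); apply: leq_trans step4.
rewrite cardQ cardsX -mulnA [X in X <= _]mulnC.
by rewrite leq_mul2l step3 orbT.
Qed.
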